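(* Let $n\ge1$ and let $\mathcal{S}(\vec u,\vec v,\vec a,\vec d)$ be the lexicographic-order specification over $n$ variables defined below, with order constraint $\mathcal{O}(\vec d)=\{d_n\ge1\}$. Then there is a cutting planes derivation of size $O(n)$ of $f_n\ge1$ from $\mathcal{S}(\vec x,\vec y,\vec a,\vec d)\cup\{d_n\ge1\}\cup\mathcal{S}(\vec y,\vec z,\vec b,\vec e)\cup\{e_n\ge1\}\cup\mathcal{S}(\vec x,\vec z,\vec c,\vec f)$, where $\vec x,\vec y,\vec z$ are disjoint lists of $n$ variables and $(\vec a,\vec d),(\vec b,\vec e),(\vec c,\vec f)$ are disjoint lists of fresh auxiliary variables. That is, transitivity of the order can be proved by a cutting planes derivation of size $O(n)$.
   Context: Literals are $x$ or $\bar x=1-x$; a PB constraint is $\sum_i c_i\ell_i\ge A$. The specification $\mathcal{S}(\vec u,\vec v,\vec a,\vec d)$ (variables $u_1..u_n$, $v_1..v_n$, $a_1..a_{n-1}$, $d_1..d_n$) consists of: $\bar a_1+u_1+\bar v_1\ge1$; $2a_1+\bar u_1+v_1\ge2$; for $1\le i\le n-2$: $3\bar a_{i+1}+2a_i+u_{i+1}+\bar v_{i+1}\ge3$ and $2a_{i+1}+2\bar a_i+\bar u_{i+1}+v_{i+1}\ge2$; $\bar d_1+v_1+\bar u_1\ge1$; $2d_1+\bar v_1+u_1\ge2$; for $1\le i\le n-1$: $4\bar d_{i+1}+3d_i+\bar a_i+v_{i+1}+\bar u_{i+1}\ge4$ and $4d_{i+1}+3\bar d_i+a_i+\bar v_{i+1}+u_{i+1}\ge3$.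 $\mathcal{S}(\vec x,\vec y,\vec a,\vec d)$ denotes substitution of $\vec x,\vec y$ (and the given auxiliary lists) for $\vec u,\vec v$ (and $\vec a,\vec d$). Cutting planes derivation: a sequence of constraints, each a premise, a literal axiom $\ell\ge0$, or obtained from earlier ones by addition, multiplication by a positive integer, division by a positive integer with rounding up of coefficients and degree, or saturation ($\sum c_i\ell_i\ge A\mapsto\sum\min(c_i,A)\ell_i\ge A$), with weakening (adding literal axioms to eliminate a term) as derived rule. The size of a derivation is the total size of the constraints in it. *)

(* Defs.v *)
From Stdlib Require Import ZArith List.
Import ListNotations.
Open Scope Z_scope.

(* Variables: (tag, index). Tags: 0=x 1=y 2=z 3=a 4=b 5=c 6=d 7=e 8=f. *)
Definition var := (nat * nat)%type.
Definition var_eq_dec : forall v w : var, {v = w} + {v <> w}.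
Proof. decide equality; apply Nat.eq_dec. Defined.

(* A PB constraint  sum_i c_i l_i >= A  (c_i >= 0) is represented as a list of
   (variable, signed coefficient) terms and the degree A: a term (v, c) with
   c > 0 stands for c*v, with c < 0 for |c|*(1-v) (i.e. |c| times the negative
   literal). Repeated variables in the list are summed. *)
Record pbc := PBC { terms : list (var * Z); degree : Z }.

Definition coef (C : pbc) (v : var) : Z :=
  fold_right (fun t acc => if var_eq_dec (fst t) v then snd t + acc else acc)
    0 (terms C).

Definition support (C : pbc) : list var := map fst (terms C).

Definition ceq (C D : pbc) : Prop :=
  (forall v, coef C v = coef D v) /\ degree C = degree D.

Definition lit := (var * bool)%type.  (* (v, true) = v, (v, false) = 1 - v *)
Definition term_of (t : Z * lit) : var * Z :=
  let '(c, (v, b)) := t in (v, if b then c else - c).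
Definition mk (ts : list (Z * lit)) (A : Z) : pbc := PBC (map term_of ts) A.
Definition pos (v : var) : lit := (v, true).
Definition neg (v : var) : lit := (v, false).

Definition ceil_div (a k : Z) : Z := - ((- a) / k).

(* amount by which the degree drops when adding coefficients a and b of the
   same variable: min(|a|,|b|) if the signs are opposite (l + ~l = 1), else 0 *)
Definition cancel (a b : Z) : Z := (Z.abs a + Z.abs b - Z.abs (a + b)) / 2.

Definition is_lit_axiom (C : pbc) : Prop :=
  exists l : lit, ceq C (mk [(1, l)] 0).

Definition is_add (C1 C2 C : pbc) : Prop :=
  (forall v, coef C v = coef C1 v + coef C2 v) /\
  degree C = degree C1 + degree C2 -
    fold_right (fun v acc => cancel (coef C1 v) (coef C2 v) + acc) 0
      (nodup var_eq_dec (support C1 ++ support C2)).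

Definition is_mult (k : Z) (C1 C : pbc) : Prop :=
  0 < k /\ (forall v, coef C v = k * coef C1 v) /\ degree C = k * degree C1.

Definition is_div (k : Z) (C1 C : pbc) : Prop :=
  0 < k /\
  (forall v, coef C v = Z.sgn (coef C1 v) * ceil_div (Z.abs (coef C1 v)) k) /\
  degree C = ceil_div (degree C1) k.

Definition is_sat (C1 C : pbc) : Prop :=
  0 <= degree C1 /\
  (forall v, coef C v = Z.sgn (coef C1 v) * Z.min (Z.abs (coef C1 v)) (degree C1)) /\
  degree C = degree C1.

Definition cp_step (prem prev : list pbc) (C : pbc) : Prop :=
  (exists P, In P prem /\ ceq C P) \/
  is_lit_axiom C \/
  (exists C1 C2, In C1 prev /\ In C2 prev /\ is_add C1 C2 C) \/
  (exists k C1, In C1 prev /\ is_mult k C1 C) \/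
  (exists k C1, In C1 prev /\ is_div k C1 C) \/
  (exists C1, In C1 prev /\ is_sat C1 C).

Fixpoint cp_valid (prem prev rest : list pbc) : Prop :=
  match rest with
  | [] => True
  | C :: r => cp_step prem prev C /\ cp_valid prem (prev ++ [C]) r
  end.

Definition cp_derivation (prem : list pbc) (goal : pbc) (D : list pbc) : Prop :=
  cp_valid prem [] D /\ exists D' C, D = D' ++ [C] /\ ceq C goal.

Definition zsize (z : Z) : Z := 1 + Z.log2 (Z.abs z + 1).
Definition pbc_size (C : pbc) : Z :=
  fold_right (fun t acc => 1 + zsize (snd t) + acc) 0 (terms C) + zsize (degree C).
Definition deriv_size (D : list pbc) : Z :=
  fold_right (fun C acc => pbc_size C + acc) 0 D.

Definition spec (n : nat) (u v a d : nat -> var) : list pbc :=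
  [ mk [(1, neg (a 1%nat)); (1, pos (u 1%nat)); (1, neg (v 1%nat))] 1;
    mk [(2, pos (a 1%nat)); (1, neg (u 1%nat)); (1, pos (v 1%nat))] 2 ] ++
  flat_map (fun i =>
    [ mk [(3, neg (a (i+1)%nat)); (2, pos (a i)); (1, pos (u (i+1)%nat));
          (1, neg (v (i+1)%nat))] 3;
      mk [(2, pos (a (i+1)%nat)); (2, neg (a i)); (1, neg (u (i+1)%nat));
          (1, pos (v (i+1)%nat))] 2 ])
    (seq 1 (n - 2)) ++
  [ mk [(1, neg (d 1%nat)); (1, pos (v 1%nat)); (1, neg (u 1%nat))] 1;
    mk [(2, pos (d 1%nat)); (1, neg (v 1%nat)); (1, pos (u 1%nat))] 2 ] ++
  flat_map (fun i =>
    [ mk [(4, neg (d (i+1)%nat)); (3, pos (d i)); (1, neg (a i));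
          (1, pos (v (i+1)%nat)); (1, neg (u (i+1)%nat))] 4;
      mk [(4, pos (d (i+1)%nat)); (3, neg (d i)); (1, pos (a i));
          (1, neg (v (i+1)%nat)); (1, pos (u (i+1)%nat))] 3 ])
    (seq 1 (n - 1)).

Definition vX (i : nat) : var := (0%nat, i).
Definition vY (i : nat) : var := (1%nat, i).
Definition vZ (i : nat) : var := (2%nat, i).
Definition vA (i : nat) : var := (3%nat, i).
Definition vB (i : nat) : var := (4%nat, i).
Definition vC (i : nat) : var := (5%nat, i).
Definition vD (i : nat) : var := (6%nat, i).
Definition vE (i : nat) : var := (7%nat, i).
Definition vF (i : nat) : var := (8%nat, i).

Definition transitivity_premises (n : nat) : list pbc :=
  spec n vX vY vA vD ++ [mk [(1, pos (vD n))] 1] ++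
  spec n vY vZ vB vE ++ [mk [(1, pos (vE n))] 1] ++
  spec n vX vZ vC vF.

Definition transitivity_goal (n : nat) : pbc := mk [(1, pos (vF n))] 1.

(* Main.v *)
Require Import Defs.
From Stdlib Require Import ZArith List Lia Bool.
Import ListNotations.
Open Scope Z_scope.

Lemma coef_notin C v : ~ In v (support C) -> coef C v = 0.
Proof.
  destruct C as [ts dg]; unfold coef, support; simpl.
  induction ts as [|[w c] ts IH]; simpl; intros H; auto.
  destruct (var_eq_dec w v); [exfalso; tauto|]. apply IH; tauto.
Qed.

Lemma check_forall (vs : list var) (f g : var -> Z) :
  forallb (fun v => f v =? g v) vs = true ->
  (forall v, ~ In v vs -> f v = g v) -> forall v, f v = g v.
Proof.
  intros H1 H2 v. destruct (in_dec var_eq_dec v vs) as [Hi|Hn]; auto.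
  rewrite forallb_forall in H1. apply Z.eqb_eq, H1; auto.
Qed.

Lemma notin_app {A} (v : A) l1 l2 : ~ In v (l1 ++ l2) -> ~ In v l1 /\ ~ In v l2.
Proof. intros H; split; intro; apply H; apply in_or_app; auto. Qed.

Definition canc_sum (C1 C2 : pbc) : Z :=
  fold_right (fun v acc => cancel (coef C1 v) (coef C2 v) + acc) 0
      (nodup var_eq_dec (support C1 ++ support C2)).

Definition ceqb C D := forallb (fun v => coef C v =? coef D v) (support C ++ support D)
  && (degree C =? degree D).
Definition addb C1 C2 C := forallb (fun v => coef C v =? coef C1 v + coef C2 v)
  (support C ++ support C1 ++ support C2) && (degree C =? degree C1 + degree C2 - canc_sum C1 C2).
Definition mulb k C1 C := (0 <? k) && forallb (fun v => coef C v =? k * coef C1 v)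
  (support C ++ support C1) && (degree C =? k * degree C1).
Definition divb k C1 C := (0 <? k) && forallb (fun v => coef C v =?
  Z.sgn (coef C1 v) * ceil_div (Z.abs (coef C1 v)) k) (support C ++ support C1)
  && (degree C =? ceil_div (degree C1) k).
Definition satb C1 C := (0 <=? degree C1) && forallb (fun v => coef C v =?
  Z.sgn (coef C1 v) * Z.min (Z.abs (coef C1 v)) (degree C1)) (support C ++ support C1)
  && (degree C =? degree C1).

Ltac zeros :=
  intros ?v Hn;
  repeat match goal with H : ~ In _ (_ ++ _) |- _ => apply notin_app in H; destruct H end;
  repeat match goal with H : ~ In ?v (support ?C) |- _ => rewrite (coef_notin C v H); clear H end;
  reflexivity.

Lemma ceqb_sound C D : ceqb C D = true -> ceq C D.
Proof.
  unfold ceqb; rewrite andb_true_iff, Z.eqb_eq; intros [H1 H2]; split; auto.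
  apply (check_forall _ _ _ H1); zeros.
Qed.

Lemma addb_sound C1 C2 C : addb C1 C2 C = true -> is_add C1 C2 C.
Proof.
  unfold addb; rewrite andb_true_iff, Z.eqb_eq; intros [H1 H2]; split; auto.
  apply (check_forall _ _ _ H1); zeros.
Qed.

Lemma mulb_sound k C1 C : mulb k C1 C = true -> is_mult k C1 C.
Proof.
  unfold mulb; rewrite !andb_true_iff, Z.eqb_eq, Z.ltb_lt; intros [[H0 H1] H2]; split; auto; split; auto.
  apply (check_forall _ _ _ H1); intros v Hn; apply notin_app in Hn; destruct Hn.
  rewrite !coef_notin by auto; ring.
Qed.

Lemma divb_sound k C1 C : divb k C1 C = true -> is_div k C1 C.
Proof.
  unfold divb; rewrite !andb_true_iff, Z.eqb_eq, Z.ltb_lt; intros [[H0 H1] H2]; split; auto; split; auto.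
  apply (check_forall _ _ _ H1); intros v Hn; apply notin_app in Hn; destruct Hn.
  rewrite !coef_notin by auto; reflexivity.
Qed.

Lemma satb_sound C1 C : satb C1 C = true -> is_sat C1 C.
Proof.
  unfold satb; rewrite !andb_true_iff, Z.eqb_eq, Z.leb_le; intros [[H0 H1] H2]; split; auto; split; auto.
  apply (check_forall _ _ _ H1); intros v Hn; apply notin_app in Hn; destruct Hn.
  rewrite !coef_notin by auto; reflexivity.
Qed.

Inductive just := JP (k : nat) | JA (l : lit) | JAdd (i j : nat) | JMul (k : Z) (i : nat)
  | JDiv (k : Z) (i : nat) | JSat (i : nat).

Definition check_step (prem prev : list pbc) (j : just) (C : pbc) : bool :=
  match j with
  | JP k => match nth_error prem k with Some P => ceqb C P | None => false end
  | JA l => ceqb C (mk [(1, l)] 0)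
  | JAdd i k => match nth_error prev i, nth_error prev k with
                | Some C1, Some C2 => addb C1 C2 C | _, _ => false end
  | JMul k i => match nth_error prev i with Some C1 => mulb k C1 C | None => false end
  | JDiv k i => match nth_error prev i with Some C1 => divb k C1 C | None => false end
  | JSat i => match nth_error prev i with Some C1 => satb C1 C | None => false end
  end.

Fixpoint check_valid (prem prev : list pbc) (r : list (just * pbc)) : bool :=
  match r with
  | [] => true
  | (j, C) :: r' => check_step prem prev j C && check_valid prem (prev ++ [C]) r'
  end.

Lemma check_step_sound prem prev j C : check_step prem prev j C = true -> cp_step prem prev C.
Proof.
  unfold cp_step; destruct j; simpl.
  - destruct (nth_error prem k) eqn:E; [|discriminate]. intros H; left.
    exists p; split; [eapply nth_error_In; eauto | apply ceqb_sound; auto].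
  - intros H; right; left. exists l. apply ceqb_sound; auto.
  - destruct (nth_error prev i) eqn:E1; [|discriminate].
    destruct (nth_error prev j) eqn:E2; [|discriminate]. intros H.
    right; right; left. exists p, p0; split; [eapply nth_error_In; eauto|]; split; [eapply nth_error_In; eauto|].
    apply addb_sound; auto.
  - destruct (nth_error prev i) eqn:E1; [|discriminate]. intros H.
    do 3 right; left. exists k, p; split; [eapply nth_error_In; eauto| apply mulb_sound; auto].
  - destruct (nth_error prev i) eqn:E1; [|discriminate]. intros H.
    do 4 right; left. exists k, p; split; [eapply nth_error_In; eauto| apply divb_sound; auto].
  - destruct (nth_error prev i) eqn:E1; [|discriminate]. intros H.
    do 5 right. exists p; split; [eapply nth_error_In; eauto| apply satb_sound; auto].
Qed.

Lemma check_valid_sound prem r : forall prev, check_valid prem prev r = true ->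
  cp_valid prem prev (map snd r).
Proof.
  induction r as [|[j C] r IH]; simpl; intros prev H; auto.
  apply andb_true_iff in H; destruct H; split; auto. eapply check_step_sound; eauto.
Qed.

Lemma step_mono prem prem' prev prev' C : incl prem prem' -> incl prev prev' ->
  cp_step prem prev C -> cp_step prem' prev' C.
Proof.
  unfold cp_step; intros Hp Hq H.
  destruct H as [[P [H1 H2]]|[H|[[C1 [C2 [H1 [H2 H3]]]]|[[k [C1 [H1 H2]]]|[[k [C1 [H1 H2]]]|[C1 [H1 H2]]]]]]].
  - left; eauto.
  - right; left; auto.
  - right; right; left; eauto 10.
  - do 3 right; left; eauto 10.
  - do 4 right; left; eauto 10.
  - do 5 right; eauto 10.
Qed.

Lemma valid_mono prem prem' r : forall prev prev', incl prem prem' -> incl prev prev' ->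
  cp_valid prem prev r -> cp_valid prem' prev' r.
Proof.
  induction r as [|C r IH]; simpl; intros prev prev' Hp Hq H; auto.
  destruct H; split; [eapply step_mono; eauto|].
  apply IH with (prev ++ [C]); auto. apply incl_app_app; auto. apply incl_refl.
Qed.

Lemma valid_app prem r1 : forall prev r2, cp_valid prem prev r1 ->
  cp_valid prem (prev ++ r1) r2 -> cp_valid prem prev (r1 ++ r2).
Proof.
  induction r1 as [|C r IH]; simpl; intros prev r2 H1 H2.
  - rewrite app_nil_r in H2; auto.
  - destruct H1; split; auto. apply IH; auto. rewrite <- app_assoc; auto.
Qed.

Definition shv (s : nat) (v : var) : var := (fst v, (snd v + s)%nat).
Definition shiftC (s : nat) (C : pbc) : pbc :=
  PBC (map (fun t => (shv s (fst t), snd t)) (terms C)) (degree C).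

Lemma shv_inj s v w : shv s v = shv s w -> v = w.
Proof.
  destruct v as [a b], w as [c d]; unfold shv; simpl; intros H; inversion H.
  f_equal; lia.
Qed.

Lemma coef_shift_at s C v : coef (shiftC s C) (shv s v) = coef C v.
Proof.
  destruct C as [ts dg]; unfold coef, shiftC; cbn [terms].
  induction ts as [|[w c] ts IH]; cbn [fold_right map fst snd]; auto.
  rewrite IH. destruct (var_eq_dec (shv s w) (shv s v)) as [e|e];
  destruct (var_eq_dec w v) as [e'|e']; auto.
  - apply shv_inj in e; contradiction.
  - subst; contradiction.
Qed.

Lemma coef_shift_out s C w : (snd w < s)%nat -> coef (shiftC s C) w = 0.
Proof.
  destruct C as [ts dg]; unfold coef, shiftC; cbn [terms]; intros Hw.
  induction ts as [|[u c] ts IH]; cbn [fold_right map fst snd]; auto.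
  rewrite IH. destruct (var_eq_dec (shv s u) w) as [e|e]; auto.
  subst; unfold shv in Hw; simpl in Hw; lia.
Qed.

Lemma shift_forall s (P : var -> Prop) : (forall v, P (shv s v)) ->
  (forall w, (snd w < s)%nat -> P w) -> forall w, P w.
Proof.
  intros H1 H2 [a b]. destruct (Nat.lt_ge_cases b s).
  - apply H2; auto.
  - specialize (H1 (a, (b - s)%nat)). unfold shv in H1; simpl in H1.
    replace (b - s + s)%nat with b in H1 by lia. auto.
Qed.

Lemma support_shift s C : support (shiftC s C) = map (shv s) (support C).
Proof. unfold support, shiftC; simpl; rewrite !map_map; reflexivity. Qed.

Lemma nodup_map_inj (f : var -> var) (Hf : forall x y, f x = f y -> x = y) l :
  nodup var_eq_dec (map f l) = map f (nodup var_eq_dec l).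
Proof.
  induction l as [|a l IH]; simpl; auto.
  destruct (in_dec var_eq_dec (f a) (map f l)) as [H|H];
  destruct (in_dec var_eq_dec a l) as [H'|H']; auto.
  - exfalso. apply in_map_iff in H. destruct H as [x [Hx1 Hx2]]. apply Hf in Hx1; subst; auto.
  - exfalso. apply H, in_map; auto.
  - simpl; f_equal; auto.
Qed.

Lemma fold_map (f : var -> var) (g : var -> Z) l :
  fold_right (fun v acc => g v + acc) 0 (map f l) = fold_right (fun v acc => g (f v) + acc) 0 l.
Proof. induction l; simpl; auto. rewrite IHl; auto. Qed.

Lemma canc_shift s C1 C2 : canc_sum (shiftC s C1) (shiftC s C2) = canc_sum C1 C2.
Proof.
  unfold canc_sum. rewrite !support_shift, <- map_app, nodup_map_inj by apply shv_inj.
  rewrite (fold_map (shv s) (fun v => cancel (coef (shiftC s C1) v) (coef (shiftC s C2) v))).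
  induction (nodup var_eq_dec (support C1 ++ support C2)); simpl; auto.
  rewrite !coef_shift_at, IHl; auto.
Qed.

Lemma ceq_shift s C D : ceq C D -> ceq (shiftC s C) (shiftC s D).
Proof.
  intros [H1 H2]; split; [|exact H2].
  apply shift_forall with s; intros v; [rewrite !coef_shift_at; auto|intros; rewrite !coef_shift_out; auto].
Qed.

Lemma step_shift s prem prev C : cp_step prem prev C ->
  cp_step (map (shiftC s) prem) (map (shiftC s) prev) (shiftC s C).
Proof.
  unfold cp_step; intros H.
  destruct H as [[P [H1 H2]]|[H|[[C1 [C2 [H1 [H2 H3]]]]|[[k [C1 [H1 H2]]]|[[k [C1 [H1 H2]]]|[C1 [H1 H2]]]]]]].
  - left; exists (shiftC s P); split; [apply in_map; auto| apply ceq_shift; auto].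
  - right; left. unfold is_lit_axiom in *. destruct H as [[v b] Hl]. exists (shv s v, b).
    apply ceq_shift with (s := s) in Hl. destruct b; exact Hl.
  - right; right; left. exists (shiftC s C1), (shiftC s C2). split; [apply in_map; auto|].
    split; [apply in_map; auto|]. destruct H3 as [H3 H4]. split.
    + apply shift_forall with s; intros v; [rewrite !coef_shift_at; auto|intros; rewrite !coef_shift_out; auto].
    + fold (canc_sum (shiftC s C1) (shiftC s C2)). rewrite canc_shift. exact H4.
  - do 3 right; left. exists k, (shiftC s C1). split; [apply in_map; auto|].
    destruct H2 as [H2 [H3 H4]]. split; auto. split; auto.
    apply shift_forall with s; intros v; [rewrite !coef_shift_at; auto|intros; rewrite !coef_shift_out; auto; ring].
  - do 4 right; left. exists k, (shiftC s C1). split; [apply in_map; auto|].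
    destruct H2 as [H2 [H3 H4]]. split; auto. split; auto.
    apply shift_forall with s; intros v; [rewrite !coef_shift_at; auto|intros; rewrite !coef_shift_out; auto].
  - do 5 right. exists (shiftC s C1). split; [apply in_map; auto|].
    destruct H2 as [H2 [H3 H4]]. split; auto. split; auto.
    apply shift_forall with s; intros v; [rewrite !coef_shift_at; auto|intros; rewrite !coef_shift_out; auto].
Qed.

Lemma valid_shift s prem r : forall prev, cp_valid prem prev r ->
  cp_valid (map (shiftC s) prem) (map (shiftC s) prev) (map (shiftC s) r).
Proof.
  induction r as [|C r IH]; simpl; [auto|]; intros prev [H1 H2]. split.
  - apply step_shift; auto.
  - specialize (IH _ H2). rewrite map_app in IH. exact IH.
Qed.

Lemma zsize_pos z : 1 <= zsize z.
Proof. unfold zsize. pose proof (Z.log2_nonneg (Z.abs z + 1)). lia. Qed.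

Lemma pbc_size_nonneg C : 0 <= pbc_size C.
Proof.
  unfold pbc_size. pose proof (zsize_pos (degree C)).
  assert (0 <= fold_right (fun t acc => 1 + zsize (snd t) + acc) 0 (terms C)); [|lia].
  induction (terms C) as [|a l IH]; cbn [fold_right]; [lia|]. pose proof (zsize_pos (snd a)). lia.
Qed.

Lemma pbc_size_shift s C : pbc_size (shiftC s C) = pbc_size C.
Proof.
  destruct C as [ts dg]; unfold pbc_size, shiftC; simpl. f_equal.
  induction ts; simpl; auto. rewrite IHts; auto.
Qed.

Lemma deriv_size_app l1 l2 : deriv_size (l1 ++ l2) = deriv_size l1 + deriv_size l2.
Proof. induction l1; simpl; auto. rewrite IHl1; ring. Qed.

Lemma deriv_size_shift s l : deriv_size (map (shiftC s) l) = deriv_size l.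
Proof. induction l; simpl; auto. rewrite IHl, pbc_size_shift; auto. Qed.

Lemma deriv_size_nonneg l : 0 <= deriv_size l.
Proof. induction l; simpl; [lia|]. pose proof (pbc_size_nonneg a); lia. Qed.

Definition ah1 (u v a : nat -> var) := mk [(1, neg (a 1%nat)); (1, pos (u 1%nat)); (1, neg (v 1%nat))] 1.
Definition ah2 (u v a : nat -> var) := mk [(2, pos (a 1%nat)); (1, neg (u 1%nat)); (1, pos (v 1%nat))] 2.
Definition as1 (u v a : nat -> var) i := mk [(3, neg (a (i+1)%nat)); (2, pos (a i)); (1, pos (u (i+1)%nat));
          (1, neg (v (i+1)%nat))] 3.
Definition as2 (u v a : nat -> var) i := mk [(2, pos (a (i+1)%nat)); (2, neg (a i)); (1, neg (u (i+1)%nat));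
          (1, pos (v (i+1)%nat))] 2.
Definition dh1 (u v d : nat -> var) := mk [(1, neg (d 1%nat)); (1, pos (v 1%nat)); (1, neg (u 1%nat))] 1.
Definition dh2 (u v d : nat -> var) := mk [(2, pos (d 1%nat)); (1, neg (v 1%nat)); (1, pos (u 1%nat))] 2.
Definition ds1 (u v a d : nat -> var) i := mk [(4, neg (d (i+1)%nat)); (3, pos (d i)); (1, neg (a i));
          (1, pos (v (i+1)%nat)); (1, neg (u (i+1)%nat))] 4.
Definition ds2 (u v a d : nat -> var) i := mk [(4, pos (d (i+1)%nat)); (3, neg (d i)); (1, pos (a i));
          (1, neg (v (i+1)%nat)); (1, pos (u (i+1)%nat))] 3.

Lemma in_ah1 n u v a d : In (ah1 u v a) (spec n u v a d).
Proof. unfold spec; simpl; auto. Qed.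
Lemma in_ah2 n u v a d : In (ah2 u v a) (spec n u v a d).
Proof. unfold spec; simpl; auto. Qed.
Lemma in_dh1 n u v a d : In (dh1 u v d) (spec n u v a d).
Proof. unfold spec. apply in_or_app; right. apply in_or_app; right. simpl; auto. Qed.
Lemma in_dh2 n u v a d : In (dh2 u v d) (spec n u v a d).
Proof. unfold spec. apply in_or_app; right. apply in_or_app; right. simpl; auto. Qed.
Lemma in_as1 n u v a d i : (1 <= i)%nat -> (i <= n - 2)%nat -> In (as1 u v a i) (spec n u v a d).
Proof.
  intros. unfold spec. apply in_or_app; right. apply in_or_app; left.
  apply in_flat_map. exists i. split; [apply in_seq; lia| simpl; auto].
Qed.
Lemma in_as2 n u v a d i : (1 <= i)%nat -> (i <= n - 2)%nat -> In (as2 u v a i) (spec n u v a d).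
Proof.
  intros. unfold spec. apply in_or_app; right. apply in_or_app; left.
  apply in_flat_map. exists i. split; [apply in_seq; lia| simpl; auto].
Qed.
Lemma in_ds1 n u v a d i : (1 <= i)%nat -> (i <= n - 1)%nat -> In (ds1 u v a d i) (spec n u v a d).
Proof.
  intros. unfold spec. apply in_or_app; right. apply in_or_app; right. apply in_or_app; right.
  apply in_flat_map. exists i. split; [apply in_seq; lia| simpl; auto].
Qed.
Lemma in_ds2 n u v a d i : (1 <= i)%nat -> (i <= n - 1)%nat -> In (ds2 u v a d i) (spec n u v a d).
Proof.
  intros. unfold spec. apply in_or_app; right. apply in_or_app; right. apply in_or_app; right.
  apply in_flat_map. exists i. split; [apply in_seq; lia| simpl; auto].
Qed.

Lemma in_P1 n P : In P (spec n vX vY vA vD) -> In P (transitivity_premises n).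
Proof. intros; unfold transitivity_premises; apply in_or_app; auto. Qed.
Lemma in_P2 n P : In P (spec n vY vZ vB vE) -> In P (transitivity_premises n).
Proof. intros; unfold transitivity_premises; apply in_or_app; right; apply in_or_app; right; apply in_or_app; auto. Qed.
Lemma in_P3 n P : In P (spec n vX vZ vC vF) -> In P (transitivity_premises n).
Proof. intros; unfold transitivity_premises; do 4 (apply in_or_app; right); auto. Qed.
Lemma in_Pd n : In (mk [(1, pos (vD n))] 1) (transitivity_premises n).
Proof. unfold transitivity_premises; apply in_or_app; right; apply in_or_app; left; simpl; auto. Qed.
Lemma in_Pe n : In (mk [(1, pos (vE n))] 1) (transitivity_premises n).
Proof. unfold transitivity_premises; do 2 (apply in_or_app; right); apply in_or_app; right;
  apply in_or_app; left; simpl; auto. Qed.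

Ltac shift_tac := intros; subst; unfold shiftC, mk, as1, as2, ds1, ds2; cbn; rewrite ?Nat.add_shuffle0; reflexivity.

Lemma sh_as1 s u v a i j (Hu : forall k, shv s (u k) = u (k + s)%nat) (Hv : forall k, shv s (v k) = v (k + s)%nat)
  (Ha : forall k, shv s (a k) = a (k + s)%nat) : j = (i + s)%nat -> shiftC s (as1 u v a i) = as1 u v a j.
Proof. intros ->; unfold shiftC, as1, mk; cbn. rewrite Hu, Hv, !Ha, Nat.add_shuffle0. reflexivity. Qed.
Lemma sh_as2 s u v a i j (Hu : forall k, shv s (u k) = u (k + s)%nat) (Hv : forall k, shv s (v k) = v (k + s)%nat)
  (Ha : forall k, shv s (a k) = a (k + s)%nat) : j = (i + s)%nat -> shiftC s (as2 u v a i) = as2 u v a j.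
Proof. intros ->; unfold shiftC, as2, mk; cbn. rewrite Hu, Hv, !Ha, Nat.add_shuffle0. reflexivity. Qed.
Lemma sh_ds1 s u v a d i j (Hu : forall k, shv s (u k) = u (k + s)%nat) (Hv : forall k, shv s (v k) = v (k + s)%nat)
  (Ha : forall k, shv s (a k) = a (k + s)%nat) (Hd : forall k, shv s (d k) = d (k + s)%nat) :
  j = (i + s)%nat -> shiftC s (ds1 u v a d i) = ds1 u v a d j.
Proof. intros ->; unfold shiftC, ds1, mk; cbn. rewrite Hu, Hv, Ha, !Hd, Nat.add_shuffle0. reflexivity. Qed.
Lemma sh_ds2 s u v a d i j (Hu : forall k, shv s (u k) = u (k + s)%nat) (Hv : forall k, shv s (v k) = v (k + s)%nat)
  (Ha : forall k, shv s (a k) = a (k + s)%nat) (Hd : forall k, shv s (d k) = d (k + s)%nat) :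
  j = (i + s)%nat -> shiftC s (ds2 u v a d i) = ds2 u v a d j.
Proof. intros ->; unfold shiftC, ds2, mk; cbn. rewrite Hu, Hv, Ha, !Hd, Nat.add_shuffle0. reflexivity. Qed.

Definition cI i := mk [(1, neg (vD i)); (1, neg (vE i)); (1, pos (vF i))] 1.
Definition cJa i := mk [(1, neg (vC i)); (1, neg (vD i)); (1, neg (vE i)); (1, pos (vA i))] 1.
Definition cJb i := mk [(1, neg (vC i)); (1, neg (vD i)); (1, neg (vE i)); (1, pos (vB i))] 1.

Definition TIt_body : list (just * pbc) :=
  [ (JP 0, PBC [((0,2)%nat, (-1)); ((1,2)%nat, 1); ((3,1)%nat, (-1)); ((6,1)%nat, 3); ((6,2)%nat, (-4))] 4)
  ; (JA ((3,1)%nat, true), PBC [((3,1)%nat, 1)] 0)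
  ; (JAdd 3 4, PBC [((0,2)%nat, (-1)); ((1,2)%nat, 1); ((6,1)%nat, 3); ((6,2)%nat, (-4))] 3)
  ; (JA ((1,2)%nat, false), PBC [((1,2)%nat, (-1))] 0)
  ; (JAdd 5 6, PBC [((0,2)%nat, (-1)); ((6,1)%nat, 3); ((6,2)%nat, (-4))] 2)
  ; (JA ((0,2)%nat, true), PBC [((0,2)%nat, 1)] 0)
  ; (JAdd 7 8, PBC [((6,1)%nat, 3); ((6,2)%nat, (-4))] 1)
  ; (JSat 9, PBC [((6,1)%nat, 1); ((6,2)%nat, (-1))] 1)
  ; (JP 0, PBC [((0,2)%nat, (-1)); ((1,2)%nat, 1); ((3,1)%nat, (-1)); ((6,1)%nat, 3); ((6,2)%nat, (-4))] 4)
  ; (JA ((6,1)%nat, false), PBC [((6,1)%nat, (-1))] 0)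
  ; (JMul 3 12, PBC [((6,1)%nat, (-3))] 0)
  ; (JAdd 11 13, PBC [((0,2)%nat, (-1)); ((1,2)%nat, 1); ((3,1)%nat, (-1)); ((6,2)%nat, (-4))] 1)
  ; (JSat 14, PBC [((0,2)%nat, (-1)); ((1,2)%nat, 1); ((3,1)%nat, (-1)); ((6,2)%nat, (-1))] 1)
  ; (JP 1, PBC [((1,2)%nat, (-1)); ((2,2)%nat, 1); ((4,1)%nat, (-1)); ((7,1)%nat, 3); ((7,2)%nat, (-4))] 4)
  ; (JA ((4,1)%nat, true), PBC [((4,1)%nat, 1)] 0)
  ; (JAdd 16 17, PBC [((1,2)%nat, (-1)); ((2,2)%nat, 1); ((7,1)%nat, 3); ((7,2)%nat, (-4))] 3)
  ; (JA ((2,2)%nat, false), PBC [((2,2)%nat, (-1))] 0)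
  ; (JAdd 18 19, PBC [((1,2)%nat, (-1)); ((7,1)%nat, 3); ((7,2)%nat, (-4))] 2)
  ; (JA ((1,2)%nat, true), PBC [((1,2)%nat, 1)] 0)
  ; (JAdd 20 21, PBC [((7,1)%nat, 3); ((7,2)%nat, (-4))] 1)
  ; (JSat 22, PBC [((7,1)%nat, 1); ((7,2)%nat, (-1))] 1)
  ; (JP 1, PBC [((1,2)%nat, (-1)); ((2,2)%nat, 1); ((4,1)%nat, (-1)); ((7,1)%nat, 3); ((7,2)%nat, (-4))] 4)
  ; (JA ((7,1)%nat, false), PBC [((7,1)%nat, (-1))] 0)
  ; (JMul 3 25, PBC [((7,1)%nat, (-3))] 0)
  ; (JAdd 24 26, PBC [((1,2)%nat, (-1)); ((2,2)%nat, 1); ((4,1)%nat, (-1)); ((7,2)%nat, (-4))] 1)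
  ; (JSat 27, PBC [((1,2)%nat, (-1)); ((2,2)%nat, 1); ((4,1)%nat, (-1)); ((7,2)%nat, (-1))] 1)
  ; (JP 2, PBC [((0,2)%nat, 1); ((2,2)%nat, (-1)); ((5,1)%nat, 1); ((8,1)%nat, (-3)); ((8,2)%nat, 4)] 3)
  ; (JA ((2,2)%nat, true), PBC [((2,2)%nat, 1)] 0)
  ; (JAdd 29 30, PBC [((0,2)%nat, 1); ((5,1)%nat, 1); ((8,1)%nat, (-3)); ((8,2)%nat, 4)] 2)
  ; (JA ((0,2)%nat, false), PBC [((0,2)%nat, (-1))] 0)
  ; (JAdd 31 32, PBC [((5,1)%nat, 1); ((8,1)%nat, (-3)); ((8,2)%nat, 4)] 1)
  ; (JSat 33, PBC [((5,1)%nat, 1); ((8,1)%nat, (-1)); ((8,2)%nat, 1)] 1)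
  ; (JP 2, PBC [((0,2)%nat, 1); ((2,2)%nat, (-1)); ((5,1)%nat, 1); ((8,1)%nat, (-3)); ((8,2)%nat, 4)] 3)
  ; (JA ((5,1)%nat, false), PBC [((5,1)%nat, (-1))] 0)
  ; (JAdd 35 36, PBC [((0,2)%nat, 1); ((2,2)%nat, (-1)); ((8,1)%nat, (-3)); ((8,2)%nat, 4)] 2)
  ; (JA ((2,2)%nat, true), PBC [((2,2)%nat, 1)] 0)
  ; (JAdd 37 38, PBC [((0,2)%nat, 1); ((8,1)%nat, (-3)); ((8,2)%nat, 4)] 1)
  ; (JSat 39, PBC [((0,2)%nat, 1); ((8,1)%nat, (-1)); ((8,2)%nat, 1)] 1)
  ; (JP 2, PBC [((0,2)%nat, 1); ((2,2)%nat, (-1)); ((5,1)%nat, 1); ((8,1)%nat, (-3)); ((8,2)%nat, 4)] 3)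
  ; (JA ((5,1)%nat, false), PBC [((5,1)%nat, (-1))] 0)
  ; (JAdd 41 42, PBC [((0,2)%nat, 1); ((2,2)%nat, (-1)); ((8,1)%nat, (-3)); ((8,2)%nat, 4)] 2)
  ; (JA ((0,2)%nat, false), PBC [((0,2)%nat, (-1))] 0)
  ; (JAdd 43 44, PBC [((2,2)%nat, (-1)); ((8,1)%nat, (-3)); ((8,2)%nat, 4)] 1)
  ; (JSat 45, PBC [((2,2)%nat, (-1)); ((8,1)%nat, (-1)); ((8,2)%nat, 1)] 1)
  ; (JAdd 34 0, PBC [((5,1)%nat, 1); ((6,1)%nat, (-1)); ((7,1)%nat, (-1)); ((8,2)%nat, 1)] 1)
  ; (JSat 47, PBC [((5,1)%nat, 1); ((6,1)%nat, (-1)); ((7,1)%nat, (-1)); ((8,2)%nat, 1)] 1)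
  ; (JAdd 48 1, PBC [((3,1)%nat, 1); ((6,1)%nat, (-2)); ((7,1)%nat, (-2)); ((8,2)%nat, 1)] 1)
  ; (JSat 49, PBC [((3,1)%nat, 1); ((6,1)%nat, (-1)); ((7,1)%nat, (-1)); ((8,2)%nat, 1)] 1)
  ; (JAdd 48 2, PBC [((4,1)%nat, 1); ((6,1)%nat, (-2)); ((7,1)%nat, (-2)); ((8,2)%nat, 1)] 1)
  ; (JSat 51, PBC [((4,1)%nat, 1); ((6,1)%nat, (-1)); ((7,1)%nat, (-1)); ((8,2)%nat, 1)] 1)
  ; (JAdd 50 15, PBC [((0,2)%nat, (-1)); ((1,2)%nat, 1); ((6,1)%nat, (-1)); ((6,2)%nat, (-1)); ((7,1)%nat, (-1)); ((8,2)%nat, 1)] 1)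
  ; (JSat 53, PBC [((0,2)%nat, (-1)); ((1,2)%nat, 1); ((6,1)%nat, (-1)); ((6,2)%nat, (-1)); ((7,1)%nat, (-1)); ((8,2)%nat, 1)] 1)
  ; (JAdd 52 28, PBC [((1,2)%nat, (-1)); ((2,2)%nat, 1); ((6,1)%nat, (-1)); ((7,1)%nat, (-1)); ((7,2)%nat, (-1)); ((8,2)%nat, 1)] 1)
  ; (JSat 55, PBC [((1,2)%nat, (-1)); ((2,2)%nat, 1); ((6,1)%nat, (-1)); ((7,1)%nat, (-1)); ((7,2)%nat, (-1)); ((8,2)%nat, 1)] 1)
  ; (JAdd 54 56, PBC [((0,2)%nat, (-1)); ((2,2)%nat, 1); ((6,1)%nat, (-2)); ((6,2)%nat, (-1)); ((7,1)%nat, (-2)); ((7,2)%nat, (-1)); ((8,2)%nat, 2)] 1)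
  ; (JSat 57, PBC [((0,2)%nat, (-1)); ((2,2)%nat, 1); ((6,1)%nat, (-1)); ((6,2)%nat, (-1)); ((7,1)%nat, (-1)); ((7,2)%nat, (-1)); ((8,2)%nat, 1)] 1)
  ; (JAdd 58 40, PBC [((2,2)%nat, 1); ((6,1)%nat, (-1)); ((6,2)%nat, (-1)); ((7,1)%nat, (-1)); ((7,2)%nat, (-1)); ((8,1)%nat, (-1)); ((8,2)%nat, 2)] 1)
  ; (JSat 59, PBC [((2,2)%nat, 1); ((6,1)%nat, (-1)); ((6,2)%nat, (-1)); ((7,1)%nat, (-1)); ((7,2)%nat, (-1)); ((8,1)%nat, (-1)); ((8,2)%nat, 1)] 1)
  ; (JAdd 60 46, PBC [((6,1)%nat, (-1)); ((6,2)%nat, (-1)); ((7,1)%nat, (-1)); ((7,2)%nat, (-1)); ((8,1)%nat, (-2)); ((8,2)%nat, 2)] 1)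
  ; (JSat 61, PBC [((6,1)%nat, (-1)); ((6,2)%nat, (-1)); ((7,1)%nat, (-1)); ((7,2)%nat, (-1)); ((8,1)%nat, (-1)); ((8,2)%nat, 1)] 1)
  ; (JAdd 62 0, PBC [((6,1)%nat, (-2)); ((6,2)%nat, (-1)); ((7,1)%nat, (-2)); ((7,2)%nat, (-1)); ((8,2)%nat, 1)] 1)
  ; (JSat 63, PBC [((6,1)%nat, (-1)); ((6,2)%nat, (-1)); ((7,1)%nat, (-1)); ((7,2)%nat, (-1)); ((8,2)%nat, 1)] 1)
  ; (JAdd 64 10, PBC [((6,2)%nat, (-2)); ((7,1)%nat, (-1)); ((7,2)%nat, (-1)); ((8,2)%nat, 1)] 1)
  ; (JSat 65, PBC [((6,2)%nat, (-1)); ((7,1)%nat, (-1)); ((7,2)%nat, (-1)); ((8,2)%nat, 1)] 1)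
  ; (JAdd 66 23, PBC [((6,2)%nat, (-1)); ((7,2)%nat, (-2)); ((8,2)%nat, 1)] 1) ].
Definition TIt : list (just * pbc) := TIt_body ++
  [ (JSat 67, cI 2) ].

Definition TJt_body : list (just * pbc) :=
  [ (JP 0, PBC [((0,2)%nat, 1); ((2,2)%nat, (-1)); ((5,1)%nat, 2); ((5,2)%nat, (-3))] 3)
  ; (JA ((0,2)%nat, false), PBC [((0,2)%nat, (-1))] 0)
  ; (JAdd 3 4, PBC [((2,2)%nat, (-1)); ((5,1)%nat, 2); ((5,2)%nat, (-3))] 2)
  ; (JA ((2,2)%nat, true), PBC [((2,2)%nat, 1)] 0)
  ; (JAdd 5 6, PBC [((5,1)%nat, 2); ((5,2)%nat, (-3))] 1)
  ; (JSat 7, PBC [((5,1)%nat, 1); ((5,2)%nat, (-1))] 1)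
  ; (JP 0, PBC [((0,2)%nat, 1); ((2,2)%nat, (-1)); ((5,1)%nat, 2); ((5,2)%nat, (-3))] 3)
  ; (JA ((5,1)%nat, false), PBC [((5,1)%nat, (-1))] 0)
  ; (JMul 2 10, PBC [((5,1)%nat, (-2))] 0)
  ; (JAdd 9 11, PBC [((0,2)%nat, 1); ((2,2)%nat, (-1)); ((5,2)%nat, (-3))] 1)
  ; (JSat 12, PBC [((0,2)%nat, 1); ((2,2)%nat, (-1)); ((5,2)%nat, (-1))] 1)
  ; (JP 1, PBC [((0,2)%nat, (-1)); ((1,2)%nat, 1); ((3,1)%nat, (-2)); ((3,2)%nat, 2)] 2)
  ; (JA ((1,2)%nat, false), PBC [((1,2)%nat, (-1))] 0)
  ; (JAdd 14 15, PBC [((0,2)%nat, (-1)); ((3,1)%nat, (-2)); ((3,2)%nat, 2)] 1)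
  ; (JSat 16, PBC [((0,2)%nat, (-1)); ((3,1)%nat, (-1)); ((3,2)%nat, 1)] 1)
  ; (JP 1, PBC [((0,2)%nat, (-1)); ((1,2)%nat, 1); ((3,1)%nat, (-2)); ((3,2)%nat, 2)] 2)
  ; (JA ((0,2)%nat, true), PBC [((0,2)%nat, 1)] 0)
  ; (JAdd 18 19, PBC [((1,2)%nat, 1); ((3,1)%nat, (-2)); ((3,2)%nat, 2)] 1)
  ; (JSat 20, PBC [((1,2)%nat, 1); ((3,1)%nat, (-1)); ((3,2)%nat, 1)] 1)
  ; (JP 2, PBC [((1,2)%nat, (-1)); ((2,2)%nat, 1); ((4,1)%nat, (-2)); ((4,2)%nat, 2)] 2)
  ; (JA ((2,2)%nat, false), PBC [((2,2)%nat, (-1))] 0)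
  ; (JAdd 22 23, PBC [((1,2)%nat, (-1)); ((4,1)%nat, (-2)); ((4,2)%nat, 2)] 1)
  ; (JSat 24, PBC [((1,2)%nat, (-1)); ((4,1)%nat, (-1)); ((4,2)%nat, 1)] 1)
  ; (JP 2, PBC [((1,2)%nat, (-1)); ((2,2)%nat, 1); ((4,1)%nat, (-2)); ((4,2)%nat, 2)] 2)
  ; (JA ((1,2)%nat, true), PBC [((1,2)%nat, 1)] 0)
  ; (JAdd 26 27, PBC [((2,2)%nat, 1); ((4,1)%nat, (-2)); ((4,2)%nat, 2)] 1)
  ; (JSat 28, PBC [((2,2)%nat, 1); ((4,1)%nat, (-1)); ((4,2)%nat, 1)] 1)
  ; (JP 3, PBC [((0,2)%nat, (-1)); ((1,2)%nat, 1); ((3,1)%nat, (-1)); ((6,1)%nat, 3); ((6,2)%nat, (-4))] 4)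
  ; (JA ((3,1)%nat, true), PBC [((3,1)%nat, 1)] 0)
  ; (JAdd 30 31, PBC [((0,2)%nat, (-1)); ((1,2)%nat, 1); ((6,1)%nat, 3); ((6,2)%nat, (-4))] 3)
  ; (JA ((1,2)%nat, false), PBC [((1,2)%nat, (-1))] 0)
  ; (JAdd 32 33, PBC [((0,2)%nat, (-1)); ((6,1)%nat, 3); ((6,2)%nat, (-4))] 2)
  ; (JA ((0,2)%nat, true), PBC [((0,2)%nat, 1)] 0)
  ; (JAdd 34 35, PBC [((6,1)%nat, 3); ((6,2)%nat, (-4))] 1)
  ; (JSat 36, PBC [((6,1)%nat, 1); ((6,2)%nat, (-1))] 1)
  ; (JP 3, PBC [((0,2)%nat, (-1)); ((1,2)%nat, 1); ((3,1)%nat, (-1)); ((6,1)%nat, 3); ((6,2)%nat, (-4))] 4)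
  ; (JA ((6,1)%nat, false), PBC [((6,1)%nat, (-1))] 0)
  ; (JMul 3 39, PBC [((6,1)%nat, (-3))] 0)
  ; (JAdd 38 40, PBC [((0,2)%nat, (-1)); ((1,2)%nat, 1); ((3,1)%nat, (-1)); ((6,2)%nat, (-4))] 1)
  ; (JSat 41, PBC [((0,2)%nat, (-1)); ((1,2)%nat, 1); ((3,1)%nat, (-1)); ((6,2)%nat, (-1))] 1)
  ; (JP 4, PBC [((1,2)%nat, (-1)); ((2,2)%nat, 1); ((4,1)%nat, (-1)); ((7,1)%nat, 3); ((7,2)%nat, (-4))] 4)
  ; (JA ((4,1)%nat, true), PBC [((4,1)%nat, 1)] 0)
  ; (JAdd 43 44, PBC [((1,2)%nat, (-1)); ((2,2)%nat, 1); ((7,1)%nat, 3); ((7,2)%nat, (-4))] 3)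
  ; (JA ((2,2)%nat, false), PBC [((2,2)%nat, (-1))] 0)
  ; (JAdd 45 46, PBC [((1,2)%nat, (-1)); ((7,1)%nat, 3); ((7,2)%nat, (-4))] 2)
  ; (JA ((1,2)%nat, true), PBC [((1,2)%nat, 1)] 0)
  ; (JAdd 47 48, PBC [((7,1)%nat, 3); ((7,2)%nat, (-4))] 1)
  ; (JSat 49, PBC [((7,1)%nat, 1); ((7,2)%nat, (-1))] 1)
  ; (JP 4, PBC [((1,2)%nat, (-1)); ((2,2)%nat, 1); ((4,1)%nat, (-1)); ((7,1)%nat, 3); ((7,2)%nat, (-4))] 4)
  ; (JA ((7,1)%nat, false), PBC [((7,1)%nat, (-1))] 0)
  ; (JMul 3 52, PBC [((7,1)%nat, (-3))] 0)
  ; (JAdd 51 53, PBC [((1,2)%nat, (-1)); ((2,2)%nat, 1); ((4,1)%nat, (-1)); ((7,2)%nat, (-4))] 1)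
  ; (JSat 54, PBC [((1,2)%nat, (-1)); ((2,2)%nat, 1); ((4,1)%nat, (-1)); ((7,2)%nat, (-1))] 1)
  ; (JAdd 1 17, PBC [((0,2)%nat, (-1)); ((3,2)%nat, 1); ((5,1)%nat, (-1)); ((6,1)%nat, (-1)); ((7,1)%nat, (-1))] 1)
  ; (JSat 56, PBC [((0,2)%nat, (-1)); ((3,2)%nat, 1); ((5,1)%nat, (-1)); ((6,1)%nat, (-1)); ((7,1)%nat, (-1))] 1)
  ; (JAdd 1 21, PBC [((1,2)%nat, 1); ((3,2)%nat, 1); ((5,1)%nat, (-1)); ((6,1)%nat, (-1)); ((7,1)%nat, (-1))] 1)
  ; (JSat 58, PBC [((1,2)%nat, 1); ((3,2)%nat, 1); ((5,1)%nat, (-1)); ((6,1)%nat, (-1)); ((7,1)%nat, (-1))] 1)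
  ; (JAdd 57 13, PBC [((2,2)%nat, (-1)); ((3,2)%nat, 1); ((5,1)%nat, (-1)); ((5,2)%nat, (-1)); ((6,1)%nat, (-1)); ((7,1)%nat, (-1))] 1)
  ; (JSat 60, PBC [((2,2)%nat, (-1)); ((3,2)%nat, 1); ((5,1)%nat, (-1)); ((5,2)%nat, (-1)); ((6,1)%nat, (-1)); ((7,1)%nat, (-1))] 1)
  ; (JAdd 55 2, PBC [((1,2)%nat, (-1)); ((2,2)%nat, 1); ((5,1)%nat, (-1)); ((6,1)%nat, (-1)); ((7,1)%nat, (-1)); ((7,2)%nat, (-1))] 1)
  ; (JSat 62, PBC [((1,2)%nat, (-1)); ((2,2)%nat, 1); ((5,1)%nat, (-1)); ((6,1)%nat, (-1)); ((7,1)%nat, (-1)); ((7,2)%nat, (-1))] 1)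
  ; (JAdd 63 59, PBC [((2,2)%nat, 1); ((3,2)%nat, 1); ((5,1)%nat, (-2)); ((6,1)%nat, (-2)); ((7,1)%nat, (-2)); ((7,2)%nat, (-1))] 1)
  ; (JSat 64, PBC [((2,2)%nat, 1); ((3,2)%nat, 1); ((5,1)%nat, (-1)); ((6,1)%nat, (-1)); ((7,1)%nat, (-1)); ((7,2)%nat, (-1))] 1)
  ; (JAdd 65 61, PBC [((3,2)%nat, 2); ((5,1)%nat, (-2)); ((5,2)%nat, (-1)); ((6,1)%nat, (-2)); ((7,1)%nat, (-2)); ((7,2)%nat, (-1))] 1)
  ; (JSat 66, PBC [((3,2)%nat, 1); ((5,1)%nat, (-1)); ((5,2)%nat, (-1)); ((6,1)%nat, (-1)); ((7,1)%nat, (-1)); ((7,2)%nat, (-1))] 1)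
  ; (JAdd 67 8, PBC [((3,2)%nat, 1); ((5,2)%nat, (-2)); ((6,1)%nat, (-1)); ((7,1)%nat, (-1)); ((7,2)%nat, (-1))] 1)
  ; (JSat 68, PBC [((3,2)%nat, 1); ((5,2)%nat, (-1)); ((6,1)%nat, (-1)); ((7,1)%nat, (-1)); ((7,2)%nat, (-1))] 1)
  ; (JAdd 69 37, PBC [((3,2)%nat, 1); ((5,2)%nat, (-1)); ((6,2)%nat, (-1)); ((7,1)%nat, (-1)); ((7,2)%nat, (-1))] 1)
  ; (JSat 70, PBC [((3,2)%nat, 1); ((5,2)%nat, (-1)); ((6,2)%nat, (-1)); ((7,1)%nat, (-1)); ((7,2)%nat, (-1))] 1)
  ; (JAdd 71 50, PBC [((3,2)%nat, 1); ((5,2)%nat, (-1)); ((6,2)%nat, (-1)); ((7,2)%nat, (-2))] 1)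
  ; (JSat 72, PBC [((3,2)%nat, 1); ((5,2)%nat, (-1)); ((6,2)%nat, (-1)); ((7,2)%nat, (-1))] 1)
  ; (JAdd 2 25, PBC [((1,2)%nat, (-1)); ((4,2)%nat, 1); ((5,1)%nat, (-1)); ((6,1)%nat, (-1)); ((7,1)%nat, (-1))] 1)
  ; (JSat 74, PBC [((1,2)%nat, (-1)); ((4,2)%nat, 1); ((5,1)%nat, (-1)); ((6,1)%nat, (-1)); ((7,1)%nat, (-1))] 1)
  ; (JAdd 2 29, PBC [((2,2)%nat, 1); ((4,2)%nat, 1); ((5,1)%nat, (-1)); ((6,1)%nat, (-1)); ((7,1)%nat, (-1))] 1)
  ; (JSat 76, PBC [((2,2)%nat, 1); ((4,2)%nat, 1); ((5,1)%nat, (-1)); ((6,1)%nat, (-1)); ((7,1)%nat, (-1))] 1)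
  ; (JAdd 77 13, PBC [((0,2)%nat, 1); ((4,2)%nat, 1); ((5,1)%nat, (-1)); ((5,2)%nat, (-1)); ((6,1)%nat, (-1)); ((7,1)%nat, (-1))] 1)
  ; (JSat 78, PBC [((0,2)%nat, 1); ((4,2)%nat, 1); ((5,1)%nat, (-1)); ((5,2)%nat, (-1)); ((6,1)%nat, (-1)); ((7,1)%nat, (-1))] 1)
  ; (JAdd 42 1, PBC [((0,2)%nat, (-1)); ((1,2)%nat, 1); ((5,1)%nat, (-1)); ((6,1)%nat, (-1)); ((6,2)%nat, (-1)); ((7,1)%nat, (-1))] 1)
  ; (JSat 80, PBC [((0,2)%nat, (-1)); ((1,2)%nat, 1); ((5,1)%nat, (-1)); ((6,1)%nat, (-1)); ((6,2)%nat, (-1)); ((7,1)%nat, (-1))] 1)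
  ; (JAdd 81 75, PBC [((0,2)%nat, (-1)); ((4,2)%nat, 1); ((5,1)%nat, (-2)); ((6,1)%nat, (-2)); ((6,2)%nat, (-1)); ((7,1)%nat, (-2))] 1)
  ; (JSat 82, PBC [((0,2)%nat, (-1)); ((4,2)%nat, 1); ((5,1)%nat, (-1)); ((6,1)%nat, (-1)); ((6,2)%nat, (-1)); ((7,1)%nat, (-1))] 1)
  ; (JAdd 83 79, PBC [((4,2)%nat, 2); ((5,1)%nat, (-2)); ((5,2)%nat, (-1)); ((6,1)%nat, (-2)); ((6,2)%nat, (-1)); ((7,1)%nat, (-2))] 1)
  ; (JSat 84, PBC [((4,2)%nat, 1); ((5,1)%nat, (-1)); ((5,2)%nat, (-1)); ((6,1)%nat, (-1)); ((6,2)%nat, (-1)); ((7,1)%nat, (-1))] 1)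
  ; (JAdd 85 8, PBC [((4,2)%nat, 1); ((5,2)%nat, (-2)); ((6,1)%nat, (-1)); ((6,2)%nat, (-1)); ((7,1)%nat, (-1))] 1)
  ; (JSat 86, PBC [((4,2)%nat, 1); ((5,2)%nat, (-1)); ((6,1)%nat, (-1)); ((6,2)%nat, (-1)); ((7,1)%nat, (-1))] 1)
  ; (JAdd 87 37, PBC [((4,2)%nat, 1); ((5,2)%nat, (-1)); ((6,2)%nat, (-2)); ((7,1)%nat, (-1))] 1)
  ; (JSat 88, PBC [((4,2)%nat, 1); ((5,2)%nat, (-1)); ((6,2)%nat, (-1)); ((7,1)%nat, (-1))] 1)
  ; (JAdd 89 50, PBC [((4,2)%nat, 1); ((5,2)%nat, (-1)); ((6,2)%nat, (-1)); ((7,2)%nat, (-1))] 1)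
  ; (JSat 90, PBC [((4,2)%nat, 1); ((5,2)%nat, (-1)); ((6,2)%nat, (-1)); ((7,2)%nat, (-1))] 1) ].
Definition TJt : list (just * pbc) := TJt_body ++
  [ (JSat 73, cJa 2)
  ; (JSat 91, cJb 2) ].

Definition TBt_body : list (just * pbc) :=
  [ (JP 3, PBC [((0,1)%nat, (-1)); ((1,1)%nat, 1); ((6,1)%nat, (-1))] 1)
  ; (JSat 0, PBC [((0,1)%nat, (-1)); ((1,1)%nat, 1); ((6,1)%nat, (-1))] 1)
  ; (JP 4, PBC [((1,1)%nat, (-1)); ((2,1)%nat, 1); ((7,1)%nat, (-1))] 1)
  ; (JSat 2, PBC [((1,1)%nat, (-1)); ((2,1)%nat, 1); ((7,1)%nat, (-1))] 1)
  ; (JP 5, PBC [((0,1)%nat, 1); ((2,1)%nat, (-1)); ((8,1)%nat, 2)] 2)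
  ; (JA ((2,1)%nat, true), PBC [((2,1)%nat, 1)] 0)
  ; (JAdd 4 5, PBC [((0,1)%nat, 1); ((8,1)%nat, 2)] 1)
  ; (JSat 6, PBC [((0,1)%nat, 1); ((8,1)%nat, 1)] 1)
  ; (JP 5, PBC [((0,1)%nat, 1); ((2,1)%nat, (-1)); ((8,1)%nat, 2)] 2)
  ; (JA ((0,1)%nat, false), PBC [((0,1)%nat, (-1))] 0)
  ; (JAdd 8 9, PBC [((2,1)%nat, (-1)); ((8,1)%nat, 2)] 1)
  ; (JSat 10, PBC [((2,1)%nat, (-1)); ((8,1)%nat, 1)] 1)
  ; (JP 0, PBC [((0,1)%nat, 1); ((2,1)%nat, (-1)); ((5,1)%nat, (-1))] 1)
  ; (JSat 12, PBC [((0,1)%nat, 1); ((2,1)%nat, (-1)); ((5,1)%nat, (-1))] 1)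
  ; (JP 1, PBC [((0,1)%nat, (-1)); ((1,1)%nat, 1); ((3,1)%nat, 2)] 2)
  ; (JA ((1,1)%nat, false), PBC [((1,1)%nat, (-1))] 0)
  ; (JAdd 14 15, PBC [((0,1)%nat, (-1)); ((3,1)%nat, 2)] 1)
  ; (JSat 16, PBC [((0,1)%nat, (-1)); ((3,1)%nat, 1)] 1)
  ; (JP 1, PBC [((0,1)%nat, (-1)); ((1,1)%nat, 1); ((3,1)%nat, 2)] 2)
  ; (JA ((0,1)%nat, true), PBC [((0,1)%nat, 1)] 0)
  ; (JAdd 18 19, PBC [((1,1)%nat, 1); ((3,1)%nat, 2)] 1)
  ; (JSat 20, PBC [((1,1)%nat, 1); ((3,1)%nat, 1)] 1)
  ; (JP 2, PBC [((1,1)%nat, (-1)); ((2,1)%nat, 1); ((4,1)%nat, 2)] 2)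
  ; (JA ((2,1)%nat, false), PBC [((2,1)%nat, (-1))] 0)
  ; (JAdd 22 23, PBC [((1,1)%nat, (-1)); ((4,1)%nat, 2)] 1)
  ; (JSat 24, PBC [((1,1)%nat, (-1)); ((4,1)%nat, 1)] 1)
  ; (JP 2, PBC [((1,1)%nat, (-1)); ((2,1)%nat, 1); ((4,1)%nat, 2)] 2)
  ; (JA ((1,1)%nat, true), PBC [((1,1)%nat, 1)] 0)
  ; (JAdd 26 27, PBC [((2,1)%nat, 1); ((4,1)%nat, 2)] 1)
  ; (JSat 28, PBC [((2,1)%nat, 1); ((4,1)%nat, 1)] 1)
  ; (JAdd 1 3, PBC [((0,1)%nat, (-1)); ((2,1)%nat, 1); ((6,1)%nat, (-1)); ((7,1)%nat, (-1))] 1)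
  ; (JSat 30, PBC [((0,1)%nat, (-1)); ((2,1)%nat, 1); ((6,1)%nat, (-1)); ((7,1)%nat, (-1))] 1)
  ; (JAdd 31 7, PBC [((2,1)%nat, 1); ((6,1)%nat, (-1)); ((7,1)%nat, (-1)); ((8,1)%nat, 1)] 1)
  ; (JSat 32, PBC [((2,1)%nat, 1); ((6,1)%nat, (-1)); ((7,1)%nat, (-1)); ((8,1)%nat, 1)] 1)
  ; (JAdd 33 11, PBC [((6,1)%nat, (-1)); ((7,1)%nat, (-1)); ((8,1)%nat, 2)] 1)
  ; (JSat 34, PBC [((6,1)%nat, (-1)); ((7,1)%nat, (-1)); ((8,1)%nat, 1)] 1)
  ; (JAdd 13 17, PBC [((2,1)%nat, (-1)); ((3,1)%nat, 1); ((5,1)%nat, (-1))] 1)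
  ; (JSat 36, PBC [((2,1)%nat, (-1)); ((3,1)%nat, 1); ((5,1)%nat, (-1))] 1)
  ; (JAdd 37 3, PBC [((1,1)%nat, (-1)); ((3,1)%nat, 1); ((5,1)%nat, (-1)); ((7,1)%nat, (-1))] 1)
  ; (JSat 38, PBC [((1,1)%nat, (-1)); ((3,1)%nat, 1); ((5,1)%nat, (-1)); ((7,1)%nat, (-1))] 1)
  ; (JAdd 39 21, PBC [((3,1)%nat, 2); ((5,1)%nat, (-1)); ((7,1)%nat, (-1))] 1)
  ; (JSat 40, PBC [((3,1)%nat, 1); ((5,1)%nat, (-1)); ((7,1)%nat, (-1))] 1)
  ; (JA ((6,1)%nat, false), PBC [((6,1)%nat, (-1))] 0)
  ; (JAdd 41 42, PBC [((3,1)%nat, 1); ((5,1)%nat, (-1)); ((6,1)%nat, (-1)); ((7,1)%nat, (-1))] 1)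
  ; (JAdd 13 29, PBC [((0,1)%nat, 1); ((4,1)%nat, 1); ((5,1)%nat, (-1))] 1)
  ; (JSat 44, PBC [((0,1)%nat, 1); ((4,1)%nat, 1); ((5,1)%nat, (-1))] 1)
  ; (JAdd 45 1, PBC [((1,1)%nat, 1); ((4,1)%nat, 1); ((5,1)%nat, (-1)); ((6,1)%nat, (-1))] 1)
  ; (JSat 46, PBC [((1,1)%nat, 1); ((4,1)%nat, 1); ((5,1)%nat, (-1)); ((6,1)%nat, (-1))] 1)
  ; (JAdd 47 25, PBC [((4,1)%nat, 2); ((5,1)%nat, (-1)); ((6,1)%nat, (-1))] 1)
  ; (JSat 48, PBC [((4,1)%nat, 1); ((5,1)%nat, (-1)); ((6,1)%nat, (-1))] 1)
  ; (JA ((7,1)%nat, false), PBC [((7,1)%nat, (-1))] 0)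
  ; (JAdd 49 50, PBC [((4,1)%nat, 1); ((5,1)%nat, (-1)); ((6,1)%nat, (-1)); ((7,1)%nat, (-1))] 1) ].
Definition TBt : list (just * pbc) := TBt_body ++
  [ (JSat 35, cI 1)
  ; (JSat 43, cJa 1)
  ; (JSat 51, cJb 1) ].

Definition TFt_body : list (just * pbc) :=
  [ (JP 0, PBC [((6,1)%nat, 1)] 1)
  ; (JAdd 0 1, PBC [((7,1)%nat, (-1)); ((8,1)%nat, 1)] 1)
  ; (JP 1, PBC [((7,1)%nat, 1)] 1) ].
Definition TFt : list (just * pbc) := TFt_body ++
  [ (JAdd 2 3, transitivity_goal 1) ].

Definition tpremI := [ds1 vX vY vA vD 1; ds1 vY vZ vB vE 1; ds2 vX vZ vC vF 1].
Definition tpremJ := [as1 vX vZ vC 1; as2 vX vY vA 1; as2 vY vZ vB 1; ds1 vX vY vA vD 1; ds1 vY vZ vB vE 1].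
Definition tpremB := [ah1 vX vZ vC; ah2 vX vY vA; ah2 vY vZ vB; dh1 vX vY vD; dh1 vY vZ vE; dh2 vX vZ vF].
Definition tpremF := [mk [(1, pos (vD 1))] 1; mk [(1, pos (vE 1))] 1].

Lemma TI_ok : check_valid tpremI [cI 1; cJa 1; cJb 1] TIt = true.
Proof. vm_compute. reflexivity. Qed.
Lemma TJ_ok : check_valid tpremJ [cI 1; cJa 1; cJb 1] TJt = true.
Proof. vm_compute. reflexivity. Qed.
Lemma TB_ok : check_valid tpremB [] TBt = true.
Proof. vm_compute. reflexivity. Qed.
Lemma TF_ok : check_valid tpremF [cI 1] TFt = true.
Proof. vm_compute. reflexivity. Qed.

Lemma in_out1 (x : pbc) (j : just) l : In x (map snd (l ++ [(j, x)])).
Proof. rewrite map_app; apply in_or_app; right; simpl; auto. Qed.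
Lemma in_out2a (x y : pbc) (j k : just) l : In x (map snd (l ++ [(j, x); (k, y)])).
Proof. rewrite map_app; apply in_or_app; right; simpl; auto. Qed.
Lemma in_out2b (x y : pbc) (j k : just) l : In y (map snd (l ++ [(j, x); (k, y)])).
Proof. rewrite map_app; apply in_or_app; right; simpl; auto. Qed.
Lemma in_out3a (x y z : pbc) (j k m : just) l : In x (map snd (l ++ [(j, x); (k, y); (m, z)])).
Proof. rewrite map_app; apply in_or_app; right; simpl; auto. Qed.
Lemma in_out3b (x y z : pbc) (j k m : just) l : In y (map snd (l ++ [(j, x); (k, y); (m, z)])).
Proof. rewrite map_app; apply in_or_app; right; simpl; auto. Qed.
Lemma in_out3c (x y z : pbc) (j k m : just) l : In z (map snd (l ++ [(j, x); (k, y); (m, z)])).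
Proof. rewrite map_app; apply in_or_app; right; simpl; auto. Qed.

Definition blockI i := map (shiftC (i - 1)) (map snd TIt).
Definition blockJ i := map (shiftC (i - 1)) (map snd TJt).
Definition block n i := blockI i ++ (if (i <=? n - 2)%nat then blockJ i else []).
Fixpoint blocks n i k := match k with O => [] | S k' => block n i ++ blocks n (S i) k' end.
Definition finalB n := map (shiftC (n - 1)) (map snd TFt).
Definition Dfull n := map snd TBt ++ blocks n 1 (n - 1) ++ finalB n.

Ltac hk := intros; reflexivity.

Lemma prev_incl i P : (1 <= i)%nat -> In (cI i) P -> In (cJa i) P -> In (cJb i) P ->
  incl (map (shiftC (i - 1)) [cI 1; cJa 1; cJb 1]) P.
Proof.
  intros Hi H1 H2 H3 Q HQ. cbn [map In] in HQ.
  change (shiftC (i-1) (cI 1)) with (cI (1 + (i - 1))) in HQ.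
  change (shiftC (i-1) (cJa 1)) with (cJa (1 + (i - 1))) in HQ.
  change (shiftC (i-1) (cJb 1)) with (cJb (1 + (i - 1))) in HQ.
  replace (1 + (i - 1))%nat with i in HQ by lia.
  destruct HQ as [<-|[<-|[<-|[]]]]; auto.
Qed.

Lemma blockI_valid n i P : (1 <= i)%nat -> (i <= n - 1)%nat ->
  In (cI i) P -> In (cJa i) P -> In (cJb i) P ->
  cp_valid (transitivity_premises n) P (blockI i).
Proof.
  intros Hi Hn H1 H2 H3.
  pose proof (valid_shift (i-1) _ _ _ (check_valid_sound _ _ _ TI_ok)) as H.
  eapply valid_mono; [| apply prev_incl; eauto | exact H].
  intros Q HQ. cbn [tpremI map In] in HQ.
  destruct HQ as [<-|[<-|[<-|[]]]].
  - rewrite (sh_ds1 (i-1) vX vY vA vD 1 i) by (hk || lia). apply in_P1, in_ds1; lia.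
  - rewrite (sh_ds1 (i-1) vY vZ vB vE 1 i) by (hk || lia). apply in_P2, in_ds1; lia.
  - rewrite (sh_ds2 (i-1) vX vZ vC vF 1 i) by (hk || lia). apply in_P3, in_ds2; lia.
Qed.

Lemma blockJ_valid n i P : (1 <= i)%nat -> (i <= n - 2)%nat ->
  In (cI i) P -> In (cJa i) P -> In (cJb i) P ->
  cp_valid (transitivity_premises n) P (blockJ i).
Proof.
  intros Hi Hn H1 H2 H3.
  pose proof (valid_shift (i-1) _ _ _ (check_valid_sound _ _ _ TJ_ok)) as H.
  eapply valid_mono; [| apply prev_incl; eauto | exact H].
  intros Q HQ. cbn [tpremJ map In] in HQ.
  destruct HQ as [<-|[<-|[<-|[<-|[<-|[]]]]]].
  - rewrite (sh_as1 (i-1) vX vZ vC 1 i) by (hk || lia). apply in_P3, in_as1; lia.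
  - rewrite (sh_as2 (i-1) vX vY vA 1 i) by (hk || lia). apply in_P1, in_as2; lia.
  - rewrite (sh_as2 (i-1) vY vZ vB 1 i) by (hk || lia). apply in_P2, in_as2; lia.
  - rewrite (sh_ds1 (i-1) vX vY vA vD 1 i) by (hk || lia). apply in_P1, in_ds1; lia.
  - rewrite (sh_ds1 (i-1) vY vZ vB vE 1 i) by (hk || lia). apply in_P2, in_ds1; lia.
Qed.

Lemma blockI_out i : (1 <= i)%nat -> In (cI (S i)) (blockI i).
Proof.
  intros Hi. unfold blockI.
  assert (H : In (cI 2) (map snd TIt)) by (unfold TIt; apply in_out1).
  apply in_map with (f := shiftC (i-1)) in H.
  change (shiftC (i-1) (cI 2)) with (cI (2 + (i - 1))) in H.
  replace (2 + (i - 1))%nat with (S i) in H by lia. exact H.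
Qed.

Lemma blockJ_out i : (1 <= i)%nat -> In (cJa (S i)) (blockJ i) /\ In (cJb (S i)) (blockJ i).
Proof.
  intros Hi. unfold blockJ.
  assert (H : In (cJa 2) (map snd TJt)) by (unfold TJt; apply in_out2a).
  assert (H' : In (cJb 2) (map snd TJt)) by (unfold TJt; apply in_out2b).
  apply in_map with (f := shiftC (i-1)) in H.
  apply in_map with (f := shiftC (i-1)) in H'.
  change (shiftC (i-1) (cJa 2)) with (cJa (2 + (i - 1))) in H.
  change (shiftC (i-1) (cJb 2)) with (cJb (2 + (i - 1))) in H'.
  replace (2 + (i - 1))%nat with (S i) in H, H' by lia. auto.
Qed.

Lemma incl_app_l {A} (l m : list A) : incl l (l ++ m).
Proof. intros x Hx; apply in_or_app; auto. Qed.

Lemma blocks_valid n k : forall i P, (1 <= i)%nat -> (i + k = n)%nat ->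
  In (cI i) P -> ((i <= n - 1)%nat -> In (cJa i) P /\ In (cJb i) P) ->
  cp_valid (transitivity_premises n) P (blocks n i k) /\ In (cI n) (P ++ blocks n i k).
Proof.
  induction k as [|k IH]; intros i P Hi Hk H1 H2.
  - cbn [blocks]. rewrite app_nil_r. split; [exact I|]. replace n with i by lia. exact H1.
  - assert (Hin : (i <= n - 1)%nat) by lia. destruct (H2 Hin) as [Ha Hb].
    assert (HB : cp_valid (transitivity_premises n) P (block n i)).
    { unfold block. apply valid_app. apply blockI_valid; auto.
      destruct (Nat.leb_spec i (n - 2)) as [Hle|Hle]; [|cbn [cp_valid]; exact I].
      apply blockJ_valid; auto; apply in_or_app; auto. }
    assert (HO1 : In (cI (S i)) (P ++ block n i)).
    { apply in_or_app; right. unfold block. apply in_or_app; left. apply blockI_out; auto. }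
    assert (HO2 : (S i <= n - 1)%nat -> In (cJa (S i)) (P ++ block n i) /\ In (cJb (S i)) (P ++ block n i)).
    { intros Hs. destruct (Nat.leb_spec i (n - 2)) as [Hle|Hle]; [|lia].
      destruct (blockJ_out i Hi) as [Ja Jb].
      unfold block. rewrite (proj2 (Nat.leb_le _ _) Hle).
      split; apply in_or_app; right; apply in_or_app; right; auto. }
    destruct (IH (S i) (P ++ block n i)) as [IH1 IH2]; [lia|lia|exact HO1|exact HO2|].
    cbn [blocks]. split.
    + apply valid_app; auto.
    + rewrite app_assoc; auto.
Qed.

Lemma final_valid n P : (1 <= n)%nat -> In (cI n) P ->
  cp_valid (transitivity_premises n) P (finalB n).
Proof.
  intros Hn H1.
  pose proof (valid_shift (n-1) _ _ _ (check_valid_sound _ _ _ TF_ok)) as H.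
  eapply valid_mono; [| | exact H].
  - intros Q HQ. cbn [tpremF map In] in HQ.
    change (shiftC (n-1) (mk [(1, pos (vD 1))] 1)) with (mk [(1, pos (vD (1 + (n-1))))] 1) in HQ.
    change (shiftC (n-1) (mk [(1, pos (vE 1))] 1)) with (mk [(1, pos (vE (1 + (n-1))))] 1) in HQ.
    replace (1 + (n - 1))%nat with n in HQ by lia.
    destruct HQ as [<-|[<-|[]]]; [apply in_Pd|apply in_Pe].
  - intros Q HQ. cbn [map In] in HQ.
    change (shiftC (n-1) (cI 1)) with (cI (1 + (n - 1))) in HQ.
    replace (1 + (n - 1))%nat with n in HQ by lia.
    destruct HQ as [<-|[]]; auto.
Qed.

Lemma blocks_size n k : forall i, deriv_size (blocks n i k) <=
  Z.of_nat k * (deriv_size (map snd TIt) + deriv_size (map snd TJt)).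
Proof.
  pose proof (deriv_size_nonneg (map snd TIt)). pose proof (deriv_size_nonneg (map snd TJt)).
  induction k as [|k IH]; intros i; cbn [blocks]; [change (deriv_size []) with 0; lia|].
  rewrite deriv_size_app. specialize (IH (S i)).
  assert (deriv_size (block n i) <= deriv_size (map snd TIt) + deriv_size (map snd TJt)).
  { unfold block, blockI, blockJ. rewrite deriv_size_app, deriv_size_shift.
    destruct (i <=? n - 2)%nat; [rewrite deriv_size_shift|change (deriv_size []) with 0]; lia. }
  lia.
Qed.

Theorem lemma14 :
  exists K : Z, forall n : nat, (1 <= n)%nat ->
    exists D : list pbc,
      cp_derivation (transitivity_premises n) (transitivity_goal n) D /\
      deriv_size D <= K * Z.of_nat n.
Proof.
  exists (deriv_size (map snd TBt) + deriv_size (map snd TIt) + deriv_size (map snd TJt)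
          + deriv_size (map snd TFt)).
  intros n Hn. exists (Dfull n). split.
  - split.
    + unfold Dfull. apply valid_app.
      * eapply valid_mono; [| apply incl_refl | exact (check_valid_sound _ _ _ TB_ok)].
        intros Q HQ. cbn [tpremB In] in HQ.
        destruct HQ as [<-|[<-|[<-|[<-|[<-|[<-|[]]]]]]].
        -- apply in_P3, in_ah1.
        -- apply in_P1, in_ah2.
        -- apply in_P2, in_ah2.
        -- apply in_P1, in_dh1.
        -- apply in_P2, in_dh1.
        -- apply in_P3, in_dh2.
      * assert (HI : In (cI 1) ([] ++ map snd TBt)) by (unfold TBt; apply in_out3a).
        assert (HJa : In (cJa 1) ([] ++ map snd TBt)) by (unfold TBt; apply in_out3b).
        assert (HJb : In (cJb 1) ([] ++ map snd TBt)) by (unfold TBt; apply in_out3c).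
        destruct (blocks_valid n (n - 1) 1 ([] ++ map snd TBt)) as [V1 V2]; auto; try lia.
        apply valid_app; auto. apply final_valid; auto.
    + exists (map snd TBt ++ blocks n 1 (n - 1) ++ map (shiftC (n - 1)) (map snd TFt_body)).
      exists (shiftC (n - 1) (transitivity_goal 1)). split.
      * unfold Dfull, finalB, TFt. rewrite !map_app, <- !app_assoc. reflexivity.
      * change (shiftC (n - 1) (transitivity_goal 1)) with (transitivity_goal (1 + (n - 1))).
        replace (1 + (n - 1))%nat with n by lia. split; reflexivity.
  - unfold Dfull, finalB. rewrite !deriv_size_app, deriv_size_shift.
    pose proof (blocks_size n (n - 1) 1).
    pose proof (deriv_size_nonneg (map snd TBt)). pose proof (deriv_size_nonneg (map snd TIt)).
    pose proof (deriv_size_nonneg (map snd TJt)). pose proof (deriv_size_nonneg (map snd TFt)).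
    rewrite Nat2Z.inj_sub in H by lia. simpl Z.of_nat in H.
    assert (1 <= Z.of_nat n) by lia. nia.
Qed.
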